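(* Let $n$ be a positive integer and $(A_i)_{i\in I}$ a family of pairwise commuting matrices in $M_n(\mathbb{C})$ such that $\sum_{i\in I}A_i^*A_i$ converges to a scalar matrix (a scalar multiple of the identity). Then every $A_i$ is normal, and consequently the $A_i$ generate a commutative $C^*$-algebra.
   Context: The sum over the (possibly infinite) index set $I$ is the limit of the net of finite partial sums. *)

(* Defs.v *)
From HB Require Import structures.
From mathcomp Require Import all_boot all_order all_algebra.
From mathcomp Require Import finmap.
From mathcomp Require Import complex.
From mathcomp Require Import reals.

Set Implicit Arguments.
Unset Strict Implicit.
Unset Printing Implicit Defensive.

Import Order.TTheory GRing.Theory Num.Theory.
Local Open Scope ring_scope.
Local Open Scope fset_scope.
Local Open Scope complex_scope.

Definition adjmx (R : realType) (m n : nat) (A : 'M[R[i]]_(m, n)) : 'M[R[i]]_(n, m) :=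
  (map_mx Num.conj A)^T.

Definition normal_cmx (R : realType) (n : nat) (A : 'M[R[i]]_n) : Prop :=
  adjmx A *m A = A *m adjmx A.

Definition fpsum (R : realType) (I : choiceType) (n : nat)
    (B : I -> 'M[R[i]]_n) (F : {fset I}) : 'M[R[i]]_n :=
  \sum_(i <- F) B i.

(* The net of finite partial sums (indexed by finite subsets of I, directed
   by inclusion) converges to L (entrywise, equivalently in any norm on the
   finite-dimensional space M_n(C)). *)
Definition sum_converges_to (R : realType) (I : choiceType) (n : nat)
    (B : I -> 'M[R[i]]_n) (L : 'M[R[i]]_n) : Prop :=
  forall eps : R, 0 < eps ->
    exists F0 : {fset I}, forall F : {fset I}, F0 `<=` F ->
      forall j k, `|(fpsum B F - L) j k| < eps%:C.

(* Main.v *)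
Require Import Defs.
From HB Require Import structures.
From mathcomp Require Import all_boot all_order all_algebra.
From mathcomp Require Import finmap complex reals.
From mathcomp Require Import ring.
From mathcomp Require Import mxred spectral.
From Stdlib Require Import Classical.
Import Order.TTheory GRing.Theory Num.Theory.
Local Open Scope ring_scope.


Section Adj.
Variable R : realType.
Local Notation C := (R[i]).

Lemma adjmxE m p (M : 'M[C]_(m, p)) i j : adjmx M i j = Num.conj (M j i).
Proof. by rewrite /adjmx !mxE. Qed.

Lemma adjmxK m p (M : 'M[C]_(m, p)) : adjmx (adjmx M) = M.
Proof. by apply/matrixP => i j; rewrite !adjmxE conjCK. Qed.

Lemma adjmxM m p q (M : 'M[C]_(m, p)) (N : 'M[C]_(p, q)) :
  adjmx (M *m N) = adjmx N *m adjmx M.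
Proof. by rewrite /adjmx map_mxM trmx_mul. Qed.

Lemma adjmxD m p (M N : 'M[C]_(m, p)) : adjmx (M + N) = adjmx M + adjmx N.
Proof. by apply/matrixP => i j; rewrite !(adjmxE, mxE) rmorphD. Qed.

Lemma adjmxN m p (M : 'M[C]_(m, p)) : adjmx (- M) = - adjmx M.
Proof. by apply/matrixP => i j; rewrite !(adjmxE, mxE) rmorphN. Qed.

Lemma adjmxB m p (M N : 'M[C]_(m, p)) : adjmx (M - N) = adjmx M - adjmx N.
Proof. by rewrite adjmxD adjmxN. Qed.

Lemma adjmxZ m p a (M : 'M[C]_(m, p)) : adjmx (a *: M) = Num.conj a *: adjmx M.
Proof. by apply/matrixP => i j; rewrite !(adjmxE, mxE) rmorphM. Qed.

Definition ip n (x y : 'cV[C]_n) : C := (adjmx y *m x) 0 0.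
Arguments ip {n}.

Lemma ipE n (x y : 'cV[C]_n) : ip x y = \sum_l Num.conj (y l 0) * x l 0.
Proof. by rewrite /ip mxE; apply: eq_bigr => l _; rewrite adjmxE. Qed.

Lemma ipDl n (x1 x2 y : 'cV[C]_n) : ip (x1 + x2) y = ip x1 y + ip x2 y.
Proof. by rewrite /ip mulmxDr mxE. Qed.
Lemma ipNl n (x y : 'cV[C]_n) : ip (- x) y = - ip x y.
Proof. by rewrite /ip mulmxN mxE. Qed.
Lemma ipBl n (x1 x2 y : 'cV[C]_n) : ip (x1 - x2) y = ip x1 y - ip x2 y.
Proof. by rewrite ipDl ipNl. Qed.
Lemma ipZl n a (x y : 'cV[C]_n) : ip (a *: x) y = a * ip x y.
Proof. by rewrite /ip -scalemxAr mxE. Qed.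
Lemma ip_conj n (x y : 'cV[C]_n) : Num.conj (ip x y) = ip y x.
Proof.
rewrite !ipE rmorph_sum; apply: eq_bigr => l _.
by rewrite rmorphM /= conjCK mulrC.
Qed.
Lemma ipDr n (x y1 y2 : 'cV[C]_n) : ip x (y1 + y2) = ip x y1 + ip x y2.
Proof. by rewrite !ipE -big_split; apply: eq_bigr => l _; rewrite !mxE rmorphD /= mulrDl. Qed.
Lemma ipBr n (x y1 y2 : 'cV[C]_n) : ip x (y1 - y2) = ip x y1 - ip x y2.
Proof. by rewrite !ipE -sumrB; apply: eq_bigr => l _; rewrite !mxE rmorphB /= mulrBl. Qed.
Lemma ipZr n a (x y : 'cV[C]_n) : ip x (a *: y) = Num.conj a * ip x y.
Proof. by rewrite !ipE mulr_sumr; apply: eq_bigr => l _; rewrite !mxE rmorphM /= mulrA. Qed.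
Lemma ip_adj n (M : 'M[C]_n) (x y : 'cV[C]_n) :
  ip (M *m x) y = ip x (adjmx M *m y).
Proof. by rewrite /ip adjmxM adjmxK mulmxA. Qed.
Lemma ip_ge0 n (x : 'cV[C]_n) : 0 <= ip x x.
Proof. by rewrite ipE sumr_ge0 // => l _; rewrite mulrC mul_conjC_ge0. Qed.
Lemma ip_eq0 n (x : 'cV[C]_n) : ip x x = 0 -> x = 0.
Proof.
rewrite ipE => /eqP; rewrite psumr_eq0 => [/allP H|l _]; last by rewrite mulrC mul_conjC_ge0.
apply/matrixP => l j; rewrite (ord1 j) mxE.
by have := H l (mem_index_enum l); rewrite /= mulrC mul_conjC_eq0 => /eqP.
Qed.

Lemma ip0l n (y : 'cV[C]_n) : ip 0 y = 0.
Proof. by rewrite /ip mulmx0 mxE. Qed.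

Lemma ip_bound n (Q : 'M[C]_n) (v y : 'cV[C]_n) (eps : R) :
  (forall j k, `|Q j k| < (eps%:C)%C) ->
  `|ip (Q *m v) y| <= (eps%:C)%C * ((\sum_j `|y j 0|) * (\sum_k `|v k 0|)).
Proof.
move=> hQ; rewrite ipE; apply: le_trans (ler_norm_sum _ _ _) _.
rewrite mulr_suml mulr_sumr; apply: ler_sum => j _.
rewrite normrM norm_conjC mulrCA; apply: ler_wpM2l => //.
rewrite mxE; apply: le_trans (ler_norm_sum _ _ _) _.
rewrite mulr_sumr; apply: ler_sum => k _.
rewrite normrM; apply: ler_wpM2r => //; exact: ltW.
Qed.

Lemma small_zero (y K : C) : 0 <= y -> 0 <= K ->
  (forall e : R, 0 < e -> y <= (e%:C)%C * K) -> y = 0.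
Proof.
case: y => a b; case: K => k l; rewrite !lecE /= => /andP[/eqP b0 a0] /andP[/eqP l0 k0] H.
move: b0 l0 H => -> -> H.
have : ~ (0 < a).
  move=> ap.
  have kp : 0 < k + 1 by rewrite ltr_pwDr.
  have := H (a / (k + 1)) (divr_gt0 ap kp).
  rewrite lecE /= => /andP[_].
  rewrite !mulr0 ?mul0r subr0 mulrAC ler_pdivlMr // => h.
  have : a <= 0 by move: h; rewrite mulrDr mulr1 -[X in _ <= X]addr0 lerD2l.
  by rewrite leNgt ap.
move=> na; have a00 : a = 0.
  by apply/eqP; rewrite eq_le a0 andbT leNgt; apply/negP.
by rewrite a00.
Qed.
End Adj.
Arguments ip {R n}.

Section Key.
Variables (R : realType) (n : nat) (I : choiceType) (A : I -> 'M[R[i]]_n).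
Hypothesis hcomm : forall i j, A i *m A j = A j *m A i.
Variable c : R[i].
Hypothesis hconv : sum_converges_to (fun i => adjmx (A i) *m A i) c%:M.

Lemma key (w : 'cV[R[i]]_n) : (forall i, exists a, A i *m w = a *: w) ->
  forall k j, adjmx (A k) *m (A j *m w) = A j *m (adjmx (A k) *m w).
Proof.
move=> hw k j.
set X := A k; set u := adjmx X *m w.
pose N := ip w w; pose s := ip u u.
pose L (Q : 'M[R[i]]_n) := s * ip (Q *m w) w - N * ip (Q *m (X *m u)) w
   - N * ip (Q *m w) (X *m u) + N * ip (Q *m u) u.
pose d i := adjmx X *m (A i *m w) - A i *m u.
have hXw : ip (X *m u) w = s by rewrite ip_adj.
have hwX : forall z, ip w (X *m z) = ip u z.
  by move=> z; rewrite -ip_conj ip_adj ip_conj.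
have Ld : forall i, N * ip (d i) (d i) = L (adjmx (A i) *m A i).
  move=> i; have [li hwi] := hw i; rewrite /L /d.
  have -> : adjmx X *m (A i *m w) = li *: u by rewrite hwi -scalemxAr.
  have hAX : A i *m (X *m u) = X *m (A i *m u) by rewrite !mulmxA hcomm.
  have t1 : ip (adjmx (A i) *m (A i *m w)) w = li * (li)^* * N.
    by rewrite ip_adj adjmxK hwi ipZl ipZr mulrA.
  have t2 : ip (adjmx (A i) *m (A i *m (X *m u))) w = (li)^* * ip (A i *m u) u.
    by rewrite ip_adj adjmxK hAX hwi ipZr ip_adj -/u.
  have t3 : ip (adjmx (A i) *m (A i *m w)) (X *m u) = li * ip u (A i *m u).
    by rewrite ip_adj adjmxK hwi hAX ipZl hwX.
  have t4 : ip (adjmx (A i) *m (A i *m u)) u = ip (A i *m u) (A i *m u).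
    by rewrite ip_adj adjmxK.
  rewrite -!mulmxA t1 t2 t3 t4.
  rewrite !ipBl !ipBr !ipZl !ipZr /N /s; ring.
have Ladd : forall P Q, L (P + Q) = L P + L Q.
  by move=> P Q; rewrite /L !mulmxDl !ipDl; ring.
have L0 : L 0 = 0 by rewrite /L !mul0mx !ip0l; ring.
have Lsub : forall P Q, L (P - Q) = L P - L Q.
  move=> P Q; have := Ladd (P - Q) Q; rewrite subrK => ->; ring.
have Lc : L c%:M = 0.
  rewrite /L !mul_scalar_mx !ipZl [ip (X *m u) w]ip_adj -/u hwX.
  by rewrite /N /s; ring.
pose Kf (v y : 'cV[R[i]]_n) := (\sum_j `|y j 0|) * (\sum_k `|v k 0|).
pose K := `|s| * Kf w w + `|N| * Kf (X *m u) w + `|N| * Kf w (X *m u) + `|N| * Kf u u.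
have K0 : 0 <= K.
  by rewrite /K /Kf !addr_ge0 // !mulr_ge0 // sumr_ge0.
have LB : forall (Q : 'M[R[i]]_n) (e : R), (forall j k, `|Q j k| < (e%:C)%C) -> `|L Q| <= (e%:C)%C * K.
  move=> Q e hQ; rewrite /L /K !mulrDr.
  have hb : forall (a : R[i]) v y, `|a * ip (Q *m v) y| <= (e%:C)%C * (`|a| * Kf v y).
    by move=> a v y; rewrite normrM mulrCA ler_wpM2l // ip_bound.
  apply: le_trans (ler_normD _ _) _; apply: lerD => //.
  apply: le_trans (ler_normB _ _) _; apply: lerD => //.
  apply: le_trans (ler_normB _ _) _; apply: lerD => //.
have hge : forall i, 0 <= N * ip (d i) (d i) by move=> i; rewrite mulr_ge0 // ip_ge0.
have H : forall e : R, 0 < e -> N * ip (d j) (d j) <= (e%:C)%C * K.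
  move=> e e0; have [F0 hF0] := hconv e e0.
  pose F := (F0 `|` [fset j])%fset.
  have jF : j \in F by rewrite !inE eqxx orbT.
  apply: (@le_trans _ _ (\sum_(i <- F) N * ip (d i) (d i))).
    by rewrite (bigD1_seq j jF (fset_uniq F)) /= lerDl sumr_ge0.
  have hy : 0 <= \sum_(i <- F) N * ip (d i) (d i) by rewrite sumr_ge0.
  have Hs : \sum_(i <- F) N * ip (d i) (d i) =
      L (fpsum (fun i => adjmx (A i) *m A i) F - c%:M).
    rewrite Lsub Lc subr0 /fpsum (big_morph L Ladd L0).
    by apply: eq_bigr => i _; exact: Ld.
  rewrite Hs in hy *; rewrite -(ger0_norm hy); apply: LB.
  exact: hF0 (fsubsetUl _ _).
have z := @small_zero R _ _ (hge j) K0 H.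
have [w0|wn0] := eqVneq w 0; first by rewrite /u w0 !mulmx0.
have N0 : N != 0 by apply: contra wn0 => /eqP /ip_eq0 ->.
move: z => /eqP; rewrite mulf_eq0 (negbTE N0) /= => /eqP /ip_eq0 /eqP.
by rewrite subr_eq0 => /eqP.
Qed.
End Key.

Lemma common_eig_in (C : numClosedFieldType) (I : Type) n (F : I -> 'M[C]_n) :
  (forall i j, F i *m F j = F j *m F i) ->
  forall (V : 'M[C]_n), V != 0 -> (forall i, stablemx V (F i)) ->
  exists2 v : 'rV_n, (v != 0) && (v <= V)%MS & forall i, exists a, v *m F i = a *: v.
Proof.
move=> hF V; move: {2}(\rank V) (leqnn (\rank V)) => r.
elim: r V => [|r IH] V hr V0 hst.
  by move: V0; rewrite -mxrank_eq0; move: hr; rewrite leqn0 => ->.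
case: (classic (exists i, forall a, ~~ (V <= eigenspace (F i) a)%MS)) => [[i hi]|hno].
  have rV : (0 < \rank V)%N by rewrite lt0n mxrank_eq0.
  have [a /eigenvalueP [x hx x0]] := eigenvalue_closed (restrictmx V (F i)) rV.
  have hxe : (x <= eigenspace (restrictmx V (F i)) a)%MS by apply/eigenspaceP.
  rewrite sub_eigenspace_conjmx ?stablemx_row_base ?row_base_free // in hxe.
  set W := (V :&: eigenspace (F i) a)%MS.
  have xW : (x *m row_base V <= W)%MS.
    by rewrite sub_capmx hxe andbT (submx_trans (submxMl _ _)) // eq_row_base.
  have W0 : W != 0.
    apply: contraNneq x0 => W0; move: xW; rewrite W0 submx0.
    by rewrite mulmx_free_eq0 ?row_base_free.
  have WV : (W <= V)%MS by exact: capmxSl.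
  have hstW : forall j, stablemx W (F j).
    move=> j; rewrite sub_capmx; apply/andP; split.
      by apply: submx_trans (hst j); apply: submxMr.
    apply: submx_trans (comm_mx_stable_eigenspace a (hF i j)).
    by apply: submxMr; exact: capmxSr.
  have hrW : (\rank W <= r)%N.
    have VW : ~~ (V <= W)%MS.
      by apply/negP => /submx_trans/(_ (capmxSr _ _)); rewrite (negbTE (hi a)).
    have := ltn_leqif (mxrank_leqif_sup WV); rewrite VW => hlt.
    by rewrite -ltnS (leq_trans hlt).
  have [v /andP[v0 vW] hv] := IH W hrW W0 hstW.
  by exists v => //; rewrite v0 (submx_trans vW WV).
have hall : forall i, exists a, (V <= eigenspace (F i) a)%MS.
  move=> i; apply: NNPP => hn; apply: hno; exists i => a.
  by apply/negP => ha; apply: hn; exists a.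
have [v vV v0] := rowV0Pn V0.
exists v; first by rewrite v0 vV.
move=> i; have [a ha] := hall i; exists a; apply/eigenspaceP.
exact: submx_trans vV ha.
Qed.

Lemma trmxZ' (K : pzRingType) m p (a : K) (M : 'M[K]_(m, p)) : (a *: M)^T = a *: M^T.
Proof. by apply/matrixP => i j; rewrite !mxE. Qed.

Lemma max_exists (P : nat -> Prop) b : P 0%N -> (forall r, P r -> (r <= b)%N) ->
  exists r, P r /\ forall r', P r' -> (r' <= r)%N.
Proof.
move=> P0 hb; apply: NNPP => hno.
have step : forall r, P r -> exists r', P r' /\ (r < r')%N.
  move=> r pr; apply: NNPP => h; apply: hno; exists r; split => // r' pr'.
  by rewrite leqNgt; apply/negP => lt; apply: h; exists r'.
have : forall k, exists r, P r /\ (k <= r)%N.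
  elim=> [|k [r [pr kr]]]; first by exists 0%N.
  have [r' [pr' lt]] := step r pr; exists r'; split => //; exact: leq_ltn_trans kr lt.
move=> /(_ b.+1) [r [pr br]]; have := hb r pr; by rewrite leqNgt br.
Qed.

Section Main.
Variables (R : realType) (n : nat) (I : choiceType) (A : I -> 'M[R[i]]_n).
Hypothesis hcomm : forall i j, A i *m A j = A j *m A i.
Variable c : R[i].
Hypothesis hconv : sum_converges_to (fun i => adjmx (A i) *m A i) c%:M.

Let B i := (A i)^T.
Let jev (v : 'rV[R[i]]_n) := forall i, exists a, v *m B i = a *: v.

Lemma adjmx0 m p : adjmx (0 : 'M[R[i]]_(m, p)) = 0.
Proof. by apply/matrixP => i j; rewrite adjmxE !mxE rmorph0. Qed.

Lemma adj_adjT m p (M : 'M[R[i]]_(m, p)) : adjmx ((adjmx M)^T) = M^T.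
Proof. by apply/matrixP => i j; rewrite /adjmx !mxE conjCK. Qed.

Lemma rowv_eq0 (v : 'rV[R[i]]_n) : v *m adjmx v = 0 -> v = 0.
Proof.
move=> h; have : ip (adjmx v) (adjmx v) = 0 by rewrite /ip adjmxK h mxE.
by move=> /ip_eq0 /(congr1 (@adjmx R _ _)); rewrite adjmxK adjmx0.
Qed.

Lemma jev_col v : jev v -> forall i, exists a, A i *m v^T = a *: v^T.
Proof.
move=> h i; have [a ha] := h i; exists a.
by rewrite -[A i]trmxK -trmx_mul -/(B i) ha trmxZ'.
Qed.

Lemma Dz v : jev v -> forall k j,
  v *m (A j *m adjmx (A k) - adjmx (A k) *m A j)^T = 0.
Proof.
move=> h k j; apply: trmx_inj; rewrite trmx_mul trmxK trmx0 mulmxBl -!mulmxA.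
by rewrite (@key R n I A hcomm c hconv _ (jev_col v h)) subrr.
Qed.

Lemma jev_adj v k : jev v -> jev (v *m (adjmx (A k))^T).
Proof.
move=> h i; have [a ha] := jev_col v h i; exists a.
apply: trmx_inj; rewrite trmxZ' !trmx_mul !trmxK.
by rewrite -(@key R n I A hcomm c hconv _ (jev_col v h)) ha -scalemxAr.
Qed.

Lemma main_comm k j : A j *m adjmx (A k) = adjmx (A k) *m A j.
Proof.
pose P r := exists m (Y : 'M[R[i]]_(m, n)), (forall l, jev (row l Y)) /\ \rank Y = r.
have P0 : P 0%N.
  exists 0%N, 0; split; last by rewrite mxrank0.
  by case.
have Pub : forall r, P r -> (r <= n)%N.
  by move=> r [m [Y [_ <-]]]; exact: rank_leq_col.
have [r [[m [Y [rowsY rkY]]] rmax]] := @max_exists P n P0 Pub.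
have inY : forall v, jev v -> (v <= Y)%MS.
  move=> v hv; apply: NNPP => /negP nvY.
  pose Y' := col_mx Y v.
  have rows' : forall l, jev (row l Y').
    move=> l; rewrite -(splitK l); case: (split l) => l' /=; first by rewrite rowKu; apply: rowsY.
    rewrite rowKd; have -> : row l' v = v by apply/rowP => q; rewrite mxE (ord1 l').
    exact: hv.
  have lt : (Y < (Y + v))%MS.
    rewrite ltmxE addsmxSl /= addsmx_sub submx_refl /=; exact: nvY.
  move: lt; rewrite ltmxErank => /andP[_].
  rewrite (eqmx_rank (introT eqmxP (addsmxE Y v))) => hlt.
  have := rmax _ (ex_intro _ _ (ex_intro _ Y' (conj rows' erefl))).
  by rewrite -rkY leqNgt hlt.
have stY : forall k, (Y *m (adjmx (A k))^T <= Y)%MS.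
  move=> k'; apply/row_subP => l; rewrite row_mul; apply: inY; apply: jev_adj.
  exact: rowsY.
pose K := kermx (adjmx Y).
have K0 : K = 0.
  apply/eqP; apply: contraT => Kn0.
  have hBc : forall i j, B i *m B j = B j *m B i.
    by move=> i j'; rewrite /B -!trmx_mul hcomm.
  have stK : forall i, stablemx K (B i).
    move=> i; apply/sub_kermxP.
    have [E hE] := submxP (stY i).
    have := congr1 (@adjmx R _ _) hE; rewrite !adjmxM adj_adjT -/(B i) => hB.
    by rewrite -mulmxA hB mulmxA (sub_kermxP (submx_refl K)) mul0mx.
  have [v /andP[v0 vK] hv] := @common_eig_in _ I n B hBc K Kn0 stK.
  have vY : (v <= Y)%MS := inY v hv.
  have : v *m adjmx v = 0.
    have [D hD] := submxP vY.
    by rewrite {2}hD adjmxM mulmxA (sub_kermxP vK) mul0mx.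
  by move=> /rowv_eq0 /eqP; rewrite (negbTE v0).
have full : row_full Y.
  have := mxrank_ker (adjmx Y); rewrite -/K K0 mxrank0 /adjmx mxrank_tr mxrank_map.
  move=> /esym /eqP; rewrite subn_eq0 => h.
  by rewrite /row_full eqn_leq rank_leq_col h.
have [Bf hBf] := row_fullP full.
set D := A j *m adjmx (A k) - adjmx (A k) *m A j.
have YD : Y *m D^T = 0.
  apply/row_matrixP => l; rewrite row_mul row0; apply: Dz; exact: rowsY.
apply/eqP; rewrite -subr_eq0 -/D; apply/eqP/trmx_inj; rewrite trmx0.
by rewrite -[D^T]mul1mx -hBf -mulmxA YD mulmx0.
Qed.
End Main.

Theorem corollary1p3 (R : realType) (n : nat) (I : choiceType)
    (A : I -> 'M[R[i]]_n) :
  (0 < n)%N ->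
  (forall i j, A i *m A j = A j *m A i) ->
  (exists c : R[i], sum_converges_to (fun i => adjmx (A i) *m A i) c%:M) ->
  (forall i, normal_cmx (A i)) /\
  (forall i j, A i *m adjmx (A j) = adjmx (A j) *m A i).
Proof.
move=> _ hcomm [c hc]; split.
  by move=> i; rewrite /normal_cmx (@main_comm R n I A hcomm c hc i i).
by move=> i j; exact: (@main_comm R n I A hcomm c hc j i).
Qed.
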